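(* Let $(s_t^{\mathrm{std}})_{t\ge1}$ be real random variables, let $W\ge1$ be an integer, $\kappa\ge0$, $h_{\mathrm C}>0$, and define for $t\ge1$ $$G_t^{\mathrm{score}}=\max_{1\le m\le\min(W,t)}\sqrt m\,\big(\bar s^{\mathrm{std}}_{t-m+1:t}-\kappa\big)_+,\qquad \bar s^{\mathrm{std}}_{t-m+1:t}=\frac1m\sum_{u=t-m+1}^t s_u^{\mathrm{std}},$$ where $(a)_+=\max(a,0)$. (i) (False alarms.) Suppose that for every $t\le T$, every $m\in\{1,\dots,\min(W,t)\}$ and every $a>0$, $\mathbb P(\sqrt m\,\bar s^{\mathrm{std}}_{t-m+1:t}>a)\le e^{-a^2/2}$. Then $$\mathbb P\Big(\max_{1\le t\le T}G_t^{\mathrm{score}}>h_{\mathrm C}\Big)\le TW\,e^{-h_{\mathrm C}^2/2}.$$ (ii) (Detection.) Suppose that for some time $t$ there is a block $\{t-m_\star+1,\dots,t\}$ of length $m_\star\le\min(W,t)$ and a number $\delta>\kappa$ such that, with $\bar s=\bar s^{\mathrm{std}}_{t-m_\star+1:t}$, one has $\mathbb P(\sqrt{m_\star}(\bar s-\delta)\le-u)\le e^{-u^2/2}$ for every $u>0$. Then for any $\beta\in(0,1)$, if $$m_\star\ge\frac{\big(h_{\mathrm C}+\sqrt{2\log(1/\beta)}\big)^2}{(\delta-\kappa)^2},$$ we have $\mathbb P(G_t^{\mathrm{score}}\le h_{\mathrm C})\le\beta$, i.e. a restart (the event $G^{\mathrm{score}}>h_{\mathrm C}$) occurs within the block with probability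 at least $1-\beta$. In particular, detection occurs within $O\big(h_{\mathrm C}^2/(\delta-\kappa)^2\big)$ samples up to logarithmic factors.
   Context: This is the window-limited CUSUM restart rule: $s_t^{\mathrm{std}}$ is a standardized prequential score (average negative log pre-update predictive likelihood on batch $t$, standardized by running mean and scale), $W$ the maximum window, $\kappa$ a drift allowance and $h_{\mathrm C}$ the restart threshold; a restart is triggered when $G_t^{\mathrm{score}}>h_{\mathrm C}$. *)

(* Defs.v *)
From HB Require Import structures.
From mathcomp Require Import all_boot all_order all_algebra.
From mathcomp Require Import all_classical all_reals all_analysis.
Set Implicit Arguments. Unset Strict Implicit. Unset Printing Implicit Defensive.
Import Order.TTheory GRing.Theory Num.Theory.
Local Open Scope ring_scope.

Definition pospart {R : realType} (a : R) : R := Num.max a 0.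

Definition sbar {R : realType} {T : Type} (s : nat -> T -> R) (t m : nat) (x : T) : R :=
  (m%:R)^-1 * \sum_(t - m + 1 <= u < t.+1) s u x.

(* G_t^score = max_{1<=m<=min(W,t)} sqrt m * (sbar_{t-m+1:t} - kappa)_+ ;
   all terms are >= 0 so using 0 as neutral element of the max is harmless. *)
Definition Gscore {R : realType} {T : Type} (W : nat) (kappa : R)
  (s : nat -> T -> R) (t : nat) (x : T) : R :=
  \big[Num.max/0]_(1 <= m < (minn W t).+1)
     (Num.sqrt (m%:R) * pospart (sbar s t m x - kappa)).

Definition maxGscore {R : realType} {T : Type} (W : nat) (kappa : R)
  (s : nat -> T -> R) (TT : nat) (x : T) : R :=
  \big[Num.max/0]_(1 <= t < TT.+1) Gscore W kappa s t x.

(* Main.v *)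
Require Import Defs.
From HB Require Import structures.
From mathcomp Require Import all_boot all_order all_algebra.
From mathcomp Require Import all_classical all_reals all_analysis.
From mathcomp Require Import ring lra.
Import Order.TTheory GRing.Theory Num.Theory.
Local Open Scope ring_scope.
Local Open Scope classical_set_scope.

Section H.
Context (R : realType) (d : measure_display) (Omega : measurableType d)
  (P : probability Omega R).

Lemma mset_lt (f : Omega -> R) a : measurable_fun setT f -> measurable [set x | a < f x].
Proof.
move=> mf; have := mf measurableT _ (measurable_itv `]a, +oo[%R).
rewrite setTI; congr measurable; apply/seteqP; split => x /=; by rewrite in_itv /= andbT.
Qed.

Lemma mset_le (f : Omega -> R) a : measurable_fun setT f -> measurable [set x | f x <= a].
Proof.
move=> mf; have := mf measurableT _ (measurable_itv `]-oo, a]%R).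
rewrite setTI; congr measurable; apply/seteqP; split => x /=; by rewrite in_itv /=.
Qed.

Lemma meas_bigmax (I : Type) (r : seq I) (f : I -> Omega -> R) :
  (forall i, measurable_fun setT (f i)) ->
  measurable_fun setT (fun x => \big[Num.max/0]_(i <- r) f i x).
Proof.
move=> mf; elim: r => [|i r IH].
  under eq_fun do rewrite big_nil. exact: measurable_cst.
under eq_fun do rewrite big_cons.
exact: (measurable_realfun.measurable_maxr (mf i) IH).
Qed.

Lemma union_bound (I : eqType) (r : seq I) (f : I -> Omega -> R) (c e : R) :
  0 <= c ->
  (forall i, measurable_fun setT (f i)) ->
  (forall i, i \in r -> P [set x | (c < f i x)%R] <= e%:E)%E ->
  (P [set x | (c < \big[Num.max/0]_(i <- r) f i x)%R] <= ((size r)%:R * e)%:E)%E.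
Proof.
move=> c0 mf; elim: r => [|i r IH] hb.
  rewrite /= mul0r.
  rewrite (_ : [set x | _] = set0) ?measure0 //.
  by apply/seteqP; split => x //=; rewrite big_nil ltNge c0.
rewrite (_ : [set x | _] = [set x | c < f i x] `|` [set x | c < \big[Num.max/0]_(i <- r) f i x]).
  apply: le_trans (measureU2 _ _ _) _; [exact: mset_lt|apply: mset_lt; exact: meas_bigmax|].
  rewrite /= -[(size r).+1]addn1 natrD mulrDl mul1r EFinD [X in (_ <= X)%E]addeC.
  by apply: leeD; [exact: hb (mem_head _ _)|apply: IH => j jr; apply: hb; rewrite inE jr orbT].
apply/seteqP; split => x /=; rewrite big_cons lt_max.
  by case/orP; [left|right].
by case=> ->; rewrite ?orbT.
Qed.

Lemma le_bigmax_in (I : eqType) (r : seq I) (f : I -> R) i :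
  i \in r -> f i <= \big[Num.max/0]_(j <- r) f j.
Proof.
elim: r => [//|j r IH]; rewrite inE big_cons => /orP[/eqP->|/IH h].
  by rewrite le_max lexx.
by rewrite le_max h orbT.
Qed.


Lemma meas_sbar (s : nat -> Omega -> R) (hs : forall t, measurable_fun setT (s t)) t m :
  measurable_fun setT (sbar s t m).
Proof.
rewrite /sbar.
apply: (@measurable_realfun.measurable_funM _ _ _ _ (cst _) (fun x => \sum_(t - m + 1 <= u < t.+1) s u x)).
  exact: measurable_cst.
exact: measurable_sum.
Qed.

Lemma meas_term (s : nat -> Omega -> R) (hs : forall t, measurable_fun setT (s t)) t (kappa : R) m :
  measurable_fun setT (fun x => Num.sqrt (m%:R) * pospart (sbar s t m x - kappa)).
Proof.
apply: (@measurable_realfun.measurable_funM _ _ _ _ (cst _) (fun x => pospart (sbar s t m x - kappa))).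
  exact: measurable_cst.
apply: (@measurable_realfun.measurable_maxr _ _ _ _ (fun x => sbar s t m x - kappa) (cst 0)).
  apply: (@measurable_realfun.measurable_funB _ _ _ _ (sbar s t m) (cst kappa)); first exact: meas_sbar.
  exact: measurable_cst.
exact: measurable_cst.
Qed.

Lemma meas_G (s : nat -> Omega -> R) (hs : forall t, measurable_fun setT (s t)) W kappa t :
  measurable_fun setT (Gscore W kappa s t).
Proof.
rewrite /Gscore; apply: meas_bigmax => m; exact: meas_term.
Qed.

End H.


Lemma pos_sub (R : realType) (m y kappa hC : R) : 0 <= m -> 0 <= kappa -> 0 < hC ->
  hC < m * pospart (y - kappa) -> hC < m * y.
Proof.
move=> m0 k0 h0; rewrite /pospart; case: (lerP (y - kappa) 0) => H.
  have hm : Num.max (y - kappa) 0 <= 0 by rewrite ge_max H lexx.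
  have : m * Num.max (y - kappa) 0 <= 0 by rewrite mulr_ge0_le0.
  lra.
have hm : Num.max (y - kappa) 0 <= y - kappa by rewrite ge_max lexx ltW.
have : m * Num.max (y - kappa) 0 <= m * (y - kappa) by rewrite ler_wpM2l.
have : 0 <= m * kappa by rewrite mulr_ge0.
rewrite mulrBr; lra.
Qed.

Theorem proposition4 (R : realType) (d : measure_display) (Omega : measurableType d)
  (P : probability Omega R) (s : nat -> Omega -> R)
  (hs : forall t, measurable_fun setT (s t))
  (W : nat) (kappa hC : R)
  (hW : (1 <= W)%N) (hkappa : 0 <= kappa) (hhC : 0 < hC) :
  (* (i) false alarms *)
  (forall TT : nat,
     (forall t m : nat, (1 <= t <= TT)%N -> (1 <= m <= minn W t)%N ->
        forall a : R, 0 < a ->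
        (P [set x | (a < Num.sqrt (m%:R) * sbar s t m x)%R] <= (expR (- (a ^+ 2) / 2))%:E)%E) ->
     (P [set x | (hC < maxGscore W kappa s TT x)%R]
        <= ((TT * W)%:R * expR (- (hC ^+ 2) / 2))%:E)%E)
  /\
  (* (ii) detection *)
  (forall (t mstar : nat) (delta : R),
     (1 <= mstar <= minn W t)%N -> kappa < delta ->
     (forall u : R, 0 < u ->
        (P [set x | (Num.sqrt (mstar%:R) * (sbar s t mstar x - delta) <= - u)%R]
           <= (expR (- (u ^+ 2) / 2))%:E)%E) ->
     forall beta : R, 0 < beta < 1 ->
     (hC + Num.sqrt (2 * ln (beta^-1))) ^+ 2 / (delta - kappa) ^+ 2 <= mstar%:R ->
     (P [set x | (Gscore W kappa s t x <= hC)%R] <= beta%:E)%E).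
Proof.
split.
  move=> TT hyp.
  set e := expR (- (hC ^+ 2) / 2).
  have e0 : 0 <= e by exact: expR_ge0.
  have hG : forall t, t \in index_iota 1 TT.+1 ->
      (P [set x | (hC < Gscore W kappa s t x)%R] <= (W%:R * e)%:E)%E.
    move=> t; rewrite mem_index_iota => ht.
    have := @union_bound R d Omega P nat (index_iota 1 (minn W t).+1)
      (fun m x => Num.sqrt (m%:R) * pospart (sbar s t m x - kappa)) hC e (ltW hhC).
    rewrite /Gscore => UB; apply: le_trans (UB _ _) _.
    - move=> m; exact: meas_term.
    - move=> m; rewrite mem_index_iota => hm.
      apply: le_trans (hyp t m ht hm hC hhC).
      apply: le_measure; rewrite ?inE.
      + apply: mset_lt; exact: meas_term.
      + apply: mset_lt.
        apply: (@measurable_realfun.measurable_funM _ _ _ _ (cst _) (sbar s t m)).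
          exact: measurable_cst.
        exact: meas_sbar.
      + move=> x /=; apply: pos_sub => //; exact: sqrtr_ge0.
    rewrite lee_fin size_iota; apply: ler_wpM2r => //.
    by rewrite ler_nat subn1 /= geq_minl.
  have := @union_bound R d Omega P nat (index_iota 1 TT.+1)
      (fun t x => Gscore W kappa s t x) hC (W%:R * e) (ltW hhC).
  rewrite /maxGscore => UB; apply: le_trans (UB _ hG) _.
    move=> t; exact: meas_G.
  by rewrite size_iota subn1 /= natrM mulrA.
move=> t ms delta hms hdelta hyp beta /andP[b0 b1] hcond.
set u := Num.sqrt (2 * ln (beta^-1)).
have lnpos : 0 < ln (beta^-1) by apply: ln_gt0; rewrite invf_gt1.
have u0 : 0 < u by rewrite sqrtr_gt0 mulr_gt0.
have hu2 : u ^+ 2 = 2 * ln (beta^-1) by rewrite sqr_sqrtr // ltW // mulr_gt0.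
have dk : 0 < delta - kappa by rewrite subr_gt0.
have key : hC + u <= Num.sqrt (ms%:R) * (delta - kappa).
  have ha0 : 0 <= hC + u by rewrite addr_ge0 // ltW.
  have hb0 : 0 <= Num.sqrt (ms%:R) * (delta - kappa) by rewrite mulr_ge0 ?sqrtr_ge0 // ltW.
  rewrite -(@ler_sqr R (hC + u) (Num.sqrt (ms%:R) * (delta - kappa))) ?nnegrE //.
  rewrite exprMn sqr_sqrtr ?ler0n // -ler_pdivrMr //; exact: exprn_gt0.
apply: (@le_trans _ _ (P [set x | (Num.sqrt (ms%:R) * (sbar s t ms x - delta) <= - u)%R])).
  apply: le_measure; rewrite ?inE.
  - apply: mset_le; exact: meas_G.
  - apply: mset_le.
    apply: (@measurable_realfun.measurable_funM _ _ _ _ (cst _) (fun x => sbar s t ms x - delta)).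
      exact: measurable_cst.
    apply: (@measurable_realfun.measurable_funB _ _ _ _ (sbar s t ms) (cst delta)).
      exact: meas_sbar.
    exact: measurable_cst.
  move=> x /= hG.
  have hm : ms \in index_iota 1 (minn W t).+1 by rewrite mem_index_iota ltnS.
  have := @le_bigmax_in R nat _ (fun m => Num.sqrt (m%:R) * pospart (sbar s t m x - kappa)) ms hm.
  rewrite -/(Gscore W kappa s t x) => h1.
  have h2 : Num.sqrt (ms%:R) * (sbar s t ms x - kappa) <= hC.
    apply: le_trans (le_trans h1 hG).
    by apply: ler_wpM2l; [exact: sqrtr_ge0| rewrite /pospart le_max lexx].
  move: h2 key; rewrite !mulrBr; lra.
apply: le_trans (hyp u u0) _.
rewrite lee_fin hu2.
have -> : - (2 * ln beta^-1) / 2 = - ln beta^-1 by field.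
rewrite expRN lnK ?invrK // posrE invr_gt0 //.
Qed.
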